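(* Let $C\subset\mathbb{R}^n$ be a pointed, $n$-dimensional closed convex cone. If $K_j$ ($j\in\mathbb{N}$) and $K$ are $C$-pseudo-cones with $K_j\to K$, then $\gamma^n(K_j)\to\gamma^n(K)$.
   Context: $C^{\circ}=\{x:\langle x,y\rangle\le 0\ \forall y\in C\}$. A pseudo-cone is a nonempty closed convex set $K$ with $o\notin K$ and $\lambda K\subseteq K$ for $\lambda\ge1$; it is a $C$-pseudo-cone if its recession cone $\{z:K+z\subseteq K\}$ equals $C$. $\gamma^n$ is the standard Gaussian probability measure on $\mathbb{R}^n$. Fix a unit vector $\mathfrak{v}\in\operatorname{int}C\cap\operatorname{int}(-C^{\circ})$ and for $t>0$ let $C^-(t)=C\cap\{x:\langle x,\mathfrak v\rangle\le t\}$, $K^-(t)=K\cap C^-(t)$. A sequence of $C$-pseudo-cones $K_j$ converges to a $C$-pseudo-cone $K$ if there is $t_0>0$ with $K_j^-(t_0)\neq\emptyset$ for all $j$ and $K_j^-(t)\to K^-(t)$ in the Hausdorff metric for all $t\ge t_0$. *)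

(* Defs.v *)
From HB Require Import structures.
From mathcomp Require Import all_boot all_order all_algebra.
From mathcomp Require Import all_classical all_reals all_analysis.
Set Implicit Arguments. Unset Strict Implicit. Unset Printing Implicit Defensive.
Import Order.TTheory GRing.Theory Num.Theory.
Import numFieldNormedType.Exports.
Local Open Scope classical_set_scope.
Local Open Scope ring_scope.

Section Defs.
Variables (R : realType) (n : nat).
Local Notation vec := 'rV[R]_n.

Definition dotv (x y : vec) : R := \sum_(i < n) x ord0 i * y ord0 i.
Definition enorm (x : vec) : R := Num.sqrt (dotv x x).

Definition convex_set (A : set vec) : Prop :=
  forall x y, A x -> A y -> forall l : R, 0 <= l <= 1 -> A (l *: x + (1 - l) *: y).

Definition closed_convex_cone (C : set vec) : Prop :=
  [/\ C 0, closed C, convex_set C & forall x l, C x -> 0 <= l -> C (l *: x)].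

Definition pointed (C : set vec) : Prop := forall x, C x -> C (- x) -> x = 0.

(* dim C = n : C contains n linearly independent vectors *)
Definition full_dim (C : set vec) : Prop :=
  exists M : 'M[R]_n, (forall i, C (row i M)) /\ row_free M.

Definition polar (C : set vec) : set vec := [set x | forall y, C y -> dotv x y <= 0].

Definition pseudo_cone (K : set vec) : Prop :=
  [/\ K !=set0, closed K, convex_set K, ~ K 0 &
      forall x l, K x -> 1 <= l -> K (l *: x)].

Definition recession_cone (K : set vec) : set vec :=
  [set z | forall x, K x -> K (x + z)].

Definition C_pseudo_cone (C K : set vec) : Prop :=
  pseudo_cone K /\ recession_cone K = C.

Definition Cminus (C : set vec) (v : vec) (t : R) : set vec :=
  C `&` [set x | dotv x v <= t].

Definition Kminus (C K : set vec) (v : vec) (t : R) : set vec :=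
  K `&` Cminus C v t.

(* Hausdorff distance (Euclidean), +oo if no admissible radius exists *)
Definition hausdorff_dist (A B : set vec) : \bar R :=
  ereal_inf [set e%:E | e in [set e : R | 0 <= e /\
     (forall a, A a -> exists2 b, B b & enorm (a - b) <= e) /\
     (forall b, B b -> exists2 a, A a & enorm (a - b) <= e)]].

Definition hausdorff_cvg (Aj : nat -> set vec) (A : set vec) : Prop :=
  (fun j => hausdorff_dist (Aj j) A) @ \oo --> 0%E.

Definition pc_cvg (C : set vec) (v : vec) (Kj : nat -> set vec) (K : set vec) : Prop :=
  exists2 t0 : R, 0 < t0 &
    (forall j, Kminus C (Kj j) v t0 !=set0) /\
    (forall t, t0 <= t -> hausdorff_cvg (fun j => Kminus C (Kj j) v t) (Kminus C K v t)).

End Defs.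

(* standard Gaussian measure on R^n, as the n-fold product of the standard
   normal distribution, written as an iterated integral over coordinates *)
Fixpoint gauss_tuple (R : realType) (n : nat) : set (n.-tuple R) -> \bar R :=
  match n with
  | 0 => fun A => ((\1_A) [tuple]) %:E
  | m.+1 => fun A => (\int[normal_prob (0:R) 1]_x
                       gauss_tuple [set t : m.-tuple R | A [tuple of x :: t]])%E
  end.

Definition gaussian (R : realType) (n : nat) (A : set 'rV[R]_n) : \bar R :=
  gauss_tuple [set t : n.-tuple R | A (\row_i tnth t i)].

(* Main.v *)
Require Import Defs.
From HB Require Import structures.
From mathcomp Require Import all_boot all_order all_algebra.
From mathcomp Require Import all_classical all_reals all_analysis.
From mathcomp Require Import measurable_realfun ring lra.
Set Implicit Arguments. Unset Strict Implicit. Unset Printing Implicit Defensive.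
Import Order.TTheory GRing.Theory Num.Theory Num.Def.
Import numFieldNormedType.Exports.
Local Open Scope classical_set_scope.
Local Open Scope ring_scope.



Section GM.
Variable R : realType.

Definition consf m : R * m.-tuple R -> m.+1.-tuple R := fun p => [tuple of p.1 :: p.2].

Lemma measurable_consf m : measurable_fun setT (@consf m).
Proof. exact: measurable_cons. Qed.

Definition gnext m (mu : probability (m.-tuple R) R) : set (m.+1.-tuple R) -> \bar R :=
  fun A => (normal_prob (0:R) 1 \x mu)%E (@consf m @^-1` A).

Section gnext_measure.
Variables (m : nat) (mu : probability (m.-tuple R) R).
Local Open Scope ereal_scope.

Let g0 : gnext mu set0 = 0.
Proof. by rewrite /gnext preimage_set0 measure0. Qed.

Let g_ge0 A : 0 <= gnext mu A.
Proof. by apply: measure_ge0. Qed.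

Let g_sigma_additive : semi_sigma_additive (gnext mu).
Proof.
move=> F mF tF mUF; rewrite /gnext preimage_bigcup.
apply: measure_semi_sigma_additive.
- by move=> n; rewrite -[X in measurable X]setTI; exact: measurable_consf.
- apply/trivIsetP => /= i j _ _ ij; rewrite -preimage_setI.
  by move/trivIsetP : tF => /(_ _ _ _ _ ij) ->//; rewrite preimage_set0.
- by rewrite -preimage_bigcup -[X in measurable X]setTI; exact: measurable_consf.
Qed.

HB.instance Definition _ := isMeasure.Build _ _ _
  (gnext mu) g0 g_ge0 g_sigma_additive.

Let gT : gnext mu setT = 1.
Proof. by rewrite /gnext preimage_setT probability_setT. Qed.

HB.instance Definition _ := Measure_isProbability.Build _ _ _ (gnext mu) gT.
End gnext_measure.

Fixpoint gm m : probability (m.-tuple R) R :=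
  match m with
  | 0 => Probability.clone _ _ _ (\d_([tuple] : 0.-tuple R)) _
  | m'.+1 => Probability.clone _ _ _ (gnext (gm m')) _
  end.

Lemma gmE m A : gm m A = gauss_tuple A.
Proof.
elim: m A => [|m IH] A //=.
rewrite /gnext /product_measure1; apply: eq_integral => x _ /=.
rewrite -IH; congr (gm m _); apply/seteqP; split => t /=.
  by rewrite /xsection /= inE.
by rewrite /xsection /= inE.
Qed.

End GM.



Section Null.
Variable R : realType.

Lemma gauss0 m : gauss_tuple (set0 : set (m.-tuple R)) = 0%E.
Proof. by rewrite -gmE measure0. Qed.

Lemma gauss_ge0 m (A : set (m.-tuple R)) : (0 <= gauss_tuple A)%E.
Proof. by rewrite -gmE measure_ge0. Qed.

Lemma normal_set1 (a : R) : normal_prob (0:R) 1 [set a] = 0%E.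
Proof.
have h : lebesgue_measure.-null_set ([set a] : set R).
  move=> A mA Aa; apply/eqP; rewrite eq_le measure_ge0 andbT.
  by rewrite -(lebesgue_measure_set1 a) le_measure// inE.
exact: (normal_prob_dominates 0 1 h).
Qed.

Lemma int_zero_off (f : R -> \bar R) (a b : R) :
  (forall x, (0 <= f x)%E) -> (forall x, x != a -> x != b -> f x = 0%E) ->
  (\int[normal_prob (0:R) 1]_x f x = 0)%E.
Proof.
move=> f0 fab.
have mf : measurable_fun setT f.
  have -> : f = (fun x => f a * (\1_[set a] x)%:E + f b * (\1_([set b] `\ a) x)%:E)%E.
    apply/funext => x; rewrite !indicE.
    have [->|xa] := eqVneq x a.
      by rewrite mem_set// memNset/= ?mule1 ?mule0 ?adde0// => -[_]; apply.
    rewrite memNset ?mule0 ?add0e; last by move=> /= xa'; rewrite xa' eqxx in xa.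
    have [xb|xb] := eqVneq x b.
      subst x; rewrite mem_set ?mule1//; split => //= ba; by rewrite ba eqxx in xa.
    rewrite memNset ?mule0 ?fab//= => -[xb' _]; by rewrite xb' eqxx in xb.
  apply: emeasurable_funD; apply: emeasurable_funM => //;
    apply/measurable_EFinP; apply: measurable_indic => //.
  exact: measurableD.
have mN : measurable ([set a] `|` [set b] : set R) by exact: measurableU.
have h : lebesgue_measure.-null_set ([set a] `|` [set b] : set R).
  move=> A mA Aab; apply/eqP; rewrite eq_le measure_ge0 andbT.
  apply: (le_trans (le_measure _ _ _ _)); [by rewrite inE| |exact: Aab|].
    by rewrite inE; apply: measurableU; exact: measurable_set1.
  have := measureU2 lebesgue_measure (measurable_set1 a) (measurable_set1 b).
  by move=> /= H; apply: (le_trans H); rewrite !lebesgue_measure_set1 adde0.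
have N0 := normal_prob_dominates 0 1 h mN (@subset_refl _ _).
rewrite (ge0_negligible_integral _ _ _ _ N0)//.
apply: integral0_eq => x [_ /not_orP[xa xb]].
by apply: fab; apply/eqP.
Qed.

Definition convT m (S : set (m.-tuple R)) := forall t t' u (l : R), S t -> S t' -> 0 <= l <= 1 ->
   (forall i, tnth u i = l * tnth t i + (1 - l) * tnth t' i) -> S u.

Definition intT m (S : set (m.-tuple R)) : set (m.-tuple R) :=
  [set z | exists2 r : R, 0 < r & forall u, (forall i, `|tnth u i - tnth z i| < r) -> S u].

Lemma tnth_cons0 m (x : R) (t : m.-tuple R) : tnth [tuple of x :: t] ord0 = x.
Proof. by []. Qed.

Lemma convT_section m (S : set (m.+1.-tuple R)) (x : R) :
  convT S -> convT [set t : m.-tuple R | S [tuple of x :: t]].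
Proof.
move=> cS t t' u l St St' l01 hu /=.
apply: (cS _ _ _ l St St' l01) => i.
case: (unliftP ord0 i) => [j ->|->]; first by rewrite !tnthS.
by rewrite !tnth_cons0; ring.
Qed.

Lemma intT_section m (S : set (m.+1.-tuple R)) (x : R) (t : m.-tuple R) :
  intT S [tuple of x :: t] -> intT [set t : m.-tuple R | S [tuple of x :: t]] t.
Proof.
move=> [r r0 hr]; exists r => // u hu /=; apply: hr => i.
case: (unliftP ord0 i) => [j ->|->]; first by rewrite !tnthS.
by rewrite !tnth_cons0 subrr normr0.
Qed.


Lemma box_ext m (S : set (m.+1.-tuple R)) (x : R) (t : m.-tuple R) (r y : R)
    (s : m.-tuple R) :
  convT S -> 0 < r ->
  (forall u : m.-tuple R, (forall i, `|tnth u i - tnth t i| < r) -> S [tuple of x :: u]) ->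
  S [tuple of y :: s] -> x != y ->
  exists2 r', 0 < r' & forall w : m.+1.-tuple R, `|tnth w ord0 - x| < r' ->
     0 <= (tnth w ord0 - x) * (y - x) ->
     (forall i, `|tnth w (lift ord0 i) - tnth t i| < r') -> S w.
Proof.
move=> cS r0 hx Sy xy.
set d := y - x.
have d0 : d != 0 by rewrite subr_eq0 eq_sym.
have ad0 : 0 < `|d| by rewrite normr_gt0.
set M := 1 + \sum_(i < m) `|tnth s i - tnth t i|.
have sge0 : 0 <= \sum_(i < m) `|tnth s i - tnth t i| by apply: sumr_ge0 => i _.
have M0 : 0 < M by rewrite /M; lra.
have hM i : `|tnth s i - tnth t i| <= M.
  rewrite /M (bigD1 i) //=.
  have : 0 <= \sum_(j < m | j != i) `|tnth s j - tnth t j| by apply: sumr_ge0.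
  lra.
set k := 2 * (1 + M / `|d|).
have Md0 : 0 <= M / `|d| by rewrite divr_ge0 // ltW.
have k0 : 0 < k by rewrite /k; lra.
have rk0 : 0 < r / k by rewrite divr_gt0.
exists (minr (`|d| / 2) (r / k)).
  by rewrite lt_min rk0 andbT divr_gt0.
move=> w hw0 hsign hwi.
move: hw0; rewrite lt_min => /andP[hw0a hw0b].
set th := (tnth w ord0 - x) / d.
have thd : th * d = tnth w ord0 - x by rewrite /th divfK.
have th0 : 0 <= th.
  have -> : th = ((tnth w ord0 - x) * d) / (d * d) by rewrite /th; field.
  by rewrite divr_ge0 // -expr2 sqr_ge0.
have thE : th = `|tnth w ord0 - x| / `|d|.
  by rewrite -normfV -normrM ger0_norm.
have th12 : th <= 1 / 2.
  by rewrite thE ler_pdivrMr // mul1r mulrC ltW.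
have thlt : th < (r / k) / `|d| by rewrite thE ltr_pM2r // invr_gt0.
have th1 : 0 < 1 - th by lra.
have th1n : 1 - th != 0 by rewrite gt_eqF.
pose y' := [tuple (tnth w (lift ord0 i) - th * tnth s i) / (1 - th) | i < m].
apply: (cS [tuple of y :: s] [tuple of x :: y'] w th Sy).
- apply: hx => i; rewrite tnth_mktuple.
  have -> : (tnth w (lift ord0 i) - th * tnth s i) / (1 - th) - tnth t i =
     ((tnth w (lift ord0 i) - tnth t i) - th * (tnth s i - tnth t i)) / (1 - th).
    by field.
  rewrite normrM [`|(1 - th)^-1|]ger0_norm ?invr_ge0 ?ltW // ltr_pdivrMr //.
  have hwi' := hwi i; move: hwi'; rewrite lt_min => /andP[_ hwib].
  have h1 : `|th * (tnth s i - tnth t i)| <= th * M.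
    by rewrite normrM (ger0_norm th0) ler_wpM2l.
  have h2 : th * M < (r / k) / `|d| * M by rewrite ltr_pM2r.
  have h3 : r / k + (r / k) / `|d| * M = r / 2.
    rewrite /k; field.
    by apply/andP; split; apply: lt0r_neq0; lra.
  have h4 : r * th <= r / 2.
    by have := ler_wpM2l (ltW r0) th12; rewrite mul1r.
  have h5 := ler_normB (tnth w (lift ord0 i) - tnth t i) (th * (tnth s i - tnth t i)).
  have h6 : r * (1 - th) = r - r * th by ring.
  rewrite h6; lra.
- by apply/andP; split; lra.
- move=> i; case: (unliftP ord0 i) => [j ->|->].
    rewrite !tnthS tnth_mktuple; field; exact: th1n.
  rewrite !tnth_cons0 -[tnth w ord0](subrK x) -thd /d; ring.
Qed.


Lemma intT_lift m (S : set (m.+1.-tuple R)) (x : R) (t : m.-tuple R) :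
  convT S ->
  (exists2 x1, x1 < x & exists t1 : m.-tuple R, S [tuple of x1 :: t1]) ->
  (exists2 x2, x < x2 & exists t2 : m.-tuple R, S [tuple of x2 :: t2]) ->
  intT [set t : m.-tuple R | S [tuple of x :: t]] t -> intT S [tuple of x :: t].
Proof.
move=> cS [x1 x1x [t1 S1]] [x2 xx2 [t2 S2]] [r r0 hr].
have [r1 r10 h1] := box_ext cS r0 hr S1 (negbT (gt_eqF x1x)).
have [r2 r20 h2] := box_ext cS r0 hr S2 (negbT (lt_eqF xx2)).
exists (minr r1 r2); first by rewrite lt_min r10 r20.
move=> u hu.
have := hu ord0; rewrite tnth_cons0 lt_min => /andP[hu01 hu02].
have hul j : `|tnth u (lift ord0 j) - tnth t j| < minr r1 r2.
  by have := hu (lift ord0 j); rewrite tnthS.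
case: (lerP 0 (tnth u ord0 - x)) => h.
- apply: h2 => //; first by nra.
  by move=> j; have := hul j; rewrite lt_min => /andP[].
- apply: h1 => //; first by nra.
  by move=> j; have := hul j; rewrite lt_min => /andP[].
Qed.

Lemma null_bd m (S : set (m.-tuple R)) : convT S -> gauss_tuple (S `\` intT S) = 0%E.
Proof.
elim: m S => [|m IH] S cS.
  have -> : S `\` intT S = set0.
    apply/seteqP; split => // z [Sz]; apply; exists 1 => // u _.
    by rewrite (tuple0 u) -(tuple0 z).
  exact: gauss0.
rewrite /=.
set J := fun x => exists t : m.-tuple R, S [tuple of x :: t].
have [a Ha] : exists a, (exists x, J x /\ forall y, J y -> x <= y) ->
    J a /\ forall y, J y -> a <= y.
  by case: (pselect (exists x, J x /\ forall y, J y -> x <= y)) => [[x hx]|h];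
    [exists x|exists 0].
have [b Hb] : exists b, (exists x, J x /\ forall y, J y -> y <= x) ->
    J b /\ forall y, J y -> y <= b.
  by case: (pselect (exists x, J x /\ forall y, J y -> y <= x)) => [[x hx]|h];
    [exists x|exists 0].
apply: (@int_zero_off _ a b); first by move=> x; exact: gauss_ge0.
move=> x xa xb.
case: (pselect (J x)) => Jx; last first.
  have -> : [set t : m.-tuple R | (S `\` intT S) [tuple of x :: t]] = set0.
    by apply/seteqP; split => // t /= [St _]; apply: Jx; exists t.
  exact: gauss0.
have lo : exists2 x1, x1 < x & J x1.
  apply: contrapT => h.
  have hx : J x /\ forall y, J y -> x <= y.
    split => // y Jy; rewrite leNgt; apply/negP => yx; apply: h; by exists y.
  have [Ja Ha'] := Ha (ex_intro _ x hx).
  have ax := Ha' _ Jx; have xa' := hx.2 _ Ja.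
  by move: xa; rewrite eq_le ax xa'.
have hi : exists2 x2, x < x2 & J x2.
  apply: contrapT => h.
  have hx : J x /\ forall y, J y -> y <= x.
    split => // y Jy; rewrite leNgt; apply/negP => yx; apply: h; by exists y.
  have [Jb Hb'] := Hb (ex_intro _ x hx).
  have bx := Hb' _ Jx; have xb' := hx.2 _ Jb.
  by move: xb; rewrite eq_le bx xb'.
have -> : [set t : m.-tuple R | (S `\` intT S) [tuple of x :: t]] =
    [set t : m.-tuple R | S [tuple of x :: t]] `\`
    intT [set t : m.-tuple R | S [tuple of x :: t]].
  apply/seteqP; split => t /= [St nI]; split => // It; apply: nI.
    exact: intT_lift.
  exact: intT_section.
apply: IH; exact: convT_section.
Qed.

End Null.



Section Meas.
Variable R : realType.

Definition Phi n (t : n.-tuple R) : 'rV[R]_n := \row_i tnth t i.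

Lemma PhiE n (t : n.-tuple R) i : Phi t ord0 i = tnth t i.
Proof. by rewrite mxE. Qed.

Lemma exists_inv_lt (e : R) : 0 < e -> exists k : nat, (k.+1%:R)^-1 < e.
Proof.
move=> e0; exists (truncn e^-1).
by rewrite invf_plt ?posrE // truncnS_gt.
Qed.

Definition Box n (k : nat) (q : n.-tuple rat) : set (n.-tuple R) :=
  [set u | forall i, ball (ratr (tnth q i) : R) (k.+1%:R)^-1 (tnth u i)].

Lemma measurable_Box n k (q : n.-tuple rat) : measurable (Box k q).
Proof.
have -> : Box k q = \bigcap_(i in [set: 'I_n])
    ((fun u : n.-tuple R => tnth u i) @^-1` ball (ratr (tnth q i) : R) (k.+1%:R)^-1).
  apply/seteqP; split => u /= h i; first by move=> _; exact: h.
  by apply: h.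
apply: fin_bigcap_measurable => // i _.
rewrite -[X in measurable X]setTI.
exact: (measurable_tnth i measurableT (measurable_ball _ _)).
Qed.

Lemma closed_meas n (A : set 'rV[R]_n) : closed A -> measurable (@Phi n @^-1` A).
Proof.
move=> cA.
pose G (j : nat) : set (n.-tuple R) :=
  match (unpickle j : option (nat * n.-tuple rat)) with
  | Some (k, q) => if pselect (Box k q `<=` ~` (@Phi n @^-1` A)) is left _
                   then Box k q else set0
  | None => set0 end.
suff -> : @Phi n @^-1` A = ~` \bigcup_j G j.
  apply: measurableC; apply: bigcupT_measurable => j; rewrite /G.
  case: (unpickle j) => [[k q]|] //; case: pselect => _ //; exact: measurable_Box.
apply/seteqP; split.
- move=> t At [j _]; rewrite /G; case: (unpickle j) => [[k q]|] //.
  by case: pselect => // h Bt; exact: h _ Bt At.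
- move=> t nG; apply: contrapT => nA; apply: nG.
  have := closed_openC cA; rewrite openE => /(_ (Phi t) nA).
  rewrite /interior /= => /nbhs_ballP [e e0 he].
  have [k hk] : exists k : nat, (k.+1%:R)^-1 < e / 2 by apply: exists_inv_lt; rewrite divr_gt0.
  have hq : forall i : 'I_n, exists q : rat,
      ball (ratr q : R) (k.+1%:R)^-1 (tnth t i).
    move=> i.
    have [|q hq] := @rat_in_itvoo R (tnth t i - (k.+1%:R)^-1) (tnth t i + (k.+1%:R)^-1).
      by rewrite ltrBlDr -addrA ltrDl addr_gt0 // invr_gt0.
    exists q; move: hq; rewrite in_itv /= => /andP[h1 h2].
    rewrite /ball /= ltr_norml.
    move: h1 h2; set c := (k.+1%:R)^-1 => h1 h2; apply/andP; split; lra.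
  have [f hf] := choice hq.
  pose q := [tuple f i | i < n].
  exists (pickle (k, q)) => //; rewrite /G pickleK.
  have Bt : Box k q t by move=> i; rewrite tnth_mktuple.
  case: pselect => // nsub; exfalso; apply: nsub => u Bu Au.
  suff : ball (Phi t) e (Phi u) by move/he.
  split => // i j; rewrite !mxE.
  have h1 := Bt j; have h2 := Bu j.
  move: h1 h2; rewrite /ball /= => h1 h2.
  have h3 := ler_distD (ratr (tnth q j)) (tnth t j) (tnth u j).
  rewrite (distrC (tnth t j) (ratr (tnth q j))) in h3.
  move: h1 h2 h3 hk; set c := (k.+1%:R)^-1; lra.
Qed.

End Meas.



Section Geo.
Variables (R : realType) (n : nat).
Local Notation vec := 'rV[R]_n.

Lemma dotvDl (x y z : vec) : dotv (x + y) z = dotv x z + dotv y z.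
Proof. by rewrite /dotv -big_split; apply: eq_bigr => i _; rewrite mxE mulrDl. Qed.

Lemma dotvZl a (x z : vec) : dotv (a *: x) z = a * dotv x z.
Proof. by rewrite /dotv mulr_sumr; apply: eq_bigr => i _; rewrite mxE mulrA. Qed.

Lemma dotvNl (x z : vec) : dotv (- x) z = - dotv x z.
Proof. by rewrite -scaleN1r dotvZl mulN1r. Qed.

Lemma dotvBl (x y z : vec) : dotv (x - y) z = dotv x z - dotv y z.
Proof. by rewrite dotvDl dotvNl. Qed.

Lemma dotv_ge0 (x : vec) : 0 <= dotv x x.
Proof. by apply: sumr_ge0 => i _; rewrite -expr2 sqr_ge0. Qed.

Lemma coord_le_enorm (x : vec) i : `|x ord0 i| <= enorm x.
Proof.
rewrite /enorm -sqrtr_sqr ler_sqrt ?dotv_ge0 // /dotv (bigD1 i) //= expr2 lerDl.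
by apply: sumr_ge0 => j _; rewrite -expr2 sqr_ge0.
Qed.

Lemma dotvC (x y : vec) : dotv x y = dotv y x.
Proof. by rewrite /dotv; apply: eq_bigr => i _; rewrite mulrC. Qed.

Lemma enormN (x : vec) : enorm (- x) = enorm x.
Proof. by rewrite /enorm dotvNl dotvC dotvNl opprK. Qed.

Lemma dotv1 (v : vec) : enorm v = 1 -> dotv v v = 1.
Proof.
move=> h; rewrite -[dotv v v]sqr_sqrtr ?dotv_ge0 //.
by rewrite -/(enorm v) h expr1n.
Qed.

Lemma interior_ball (C : set vec) v : interior C v ->
  exists2 rho : R, 0 < rho & forall u : vec, (forall i, `|v ord0 i - u ord0 i| < rho) -> C u.
Proof.
rewrite /interior /= => /nbhs_ballP [rho rho0 hb]; exists rho => // u hu.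
apply: hb; split => // i j; rewrite (ord1 i); exact: hu.
Qed.

Lemma shift_in_coord (C A : set vec) (v y z : vec) (s rho : R) :
  (forall a c, A a -> C c -> A (a + c)) ->
  (forall x l, C x -> 0 <= l -> C (l *: x)) ->
  (forall u : vec, (forall i, `|v ord0 i - u ord0 i| < rho) -> C u) ->
  0 < s -> A y -> (forall i, `|z ord0 i - y ord0 i| < s * rho) -> A (z + s *: v).
Proof.
move=> recA cone hrho s0 Ay hzy.
have -> : z + s *: v = y + s *: (v + s^-1 *: (z - y)).
  by rewrite scalerDr scalerA divff ?gt_eqF // scale1r addrCA subrKC addrC.
apply: recA => //; apply: cone; last exact: ltW.
apply: hrho => i; rewrite !mxE opprD addNKr normrN normrM ger0_norm ?invr_ge0 ?ltW //.
by rewrite ltr_pdivrMl.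
Qed.

Lemma shift_in (C A : set vec) (v y z : vec) (s rho : R) :
  (forall a c, A a -> C c -> A (a + c)) ->
  (forall x l, C x -> 0 <= l -> C (l *: x)) ->
  (forall u : vec, (forall i, `|v ord0 i - u ord0 i| < rho) -> C u) ->
  0 < s -> A y -> enorm (z - y) < s * rho -> A (z + s *: v).
Proof.
move=> recA cone hrho s0 Ay hzy.
have -> : z + s *: v = y + s *: (v + s^-1 *: (z - y)).
  by rewrite scalerDr scalerA divff ?gt_eqF // scale1r addrCA subrKC addrC.
apply: recA => //; apply: cone; last exact: ltW.
apply: hrho => i; rewrite !mxE opprD addNKr normrN normrM ger0_norm ?invr_ge0 ?ltW //.
rewrite ltr_pdivrMl //.
by have := coord_le_enorm (z - y) i; rewrite !mxE => h; exact: le_lt_trans h hzy.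
Qed.


Lemma pc_rec (K : set vec) x : pseudo_cone K -> K x -> recession_cone K x.
Proof.
case=> _ cK cvK _ scK Kx y Ky.
have hu k : K ((k.+1%:R^-1) *: (k.+1%:R *: x) + (1 - k.+1%:R^-1) *: y).
  apply: cvK => //; first by apply: scK => //; rewrite ler1n.
  by apply/andP; split; [rewrite invr_ge0 | rewrite invf_le1 // ler1n].
have E k : (k.+1%:R^-1) *: (k.+1%:R *: x) + (1 - k.+1%:R^-1) *: y =
    (1 - harmonic k) *: y + x :> vec.
  by rewrite scalerA mulVf // scale1r addrC.
apply: (@closed_cvg nat _ \oo _ (fun k : nat => (1 - harmonic k) *: y + x) K cK).
  by apply: nearW => k; rewrite -E; exact: hu.
have -> : y + x = (1 - 0) *: y + x by rewrite subr0 scale1r.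
apply: cvgD; last exact: cvg_cst.
apply: cvgZr_tmp; apply: cvgB; [exact: cvg_cst | exact: cvg_harmonic].
Qed.

Lemma close_lim (A : set vec) (z v : vec) : closed A ->
  (forall k, A (z + harmonic k *: v)) -> A z.
Proof.
move=> cA hA.
apply: (@closed_cvg nat _ \oo _ (fun k : nat => z + harmonic k *: v) A cA).
  exact: nearW.
have {2}-> : z = z + 0 *: v by rewrite scale0r addr0.
apply: cvgD; first exact: cvg_cst.
apply: cvgZr_tmp; exact: cvg_harmonic.
Qed.

End Geo.



Section Main.
Variables (R : realType) (n : nat).
Local Notation vec := 'rV[R]_n.
Local Notation mu := (gm R n).

Lemma gm_fin (A : set (n.-tuple R)) : measurable A -> mu A = (fine (mu A))%:E.
Proof. by move=> mA; rewrite fineK // fin_num_measure. Qed.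

Lemma g_le_union (X Y Z : set (n.-tuple R)) :
  measurable X -> measurable Y -> measurable Z -> X `<=` Y `|` Z ->
  fine (mu X) <= fine (mu Y) + fine (mu Z).
Proof.
move=> mX mY mZ XYZ.
have h1 : (mu X <= mu (Y `|` Z))%E by rewrite le_measure // inE //; exact: measurableU.
have h2 := measureU2 mu mY mZ.
have h := le_trans h1 h2.
have : ((fine (mu X))%:E <= (fine (mu Y) + fine (mu Z))%:E)%E.
  by rewrite EFinD -(gm_fin mX) -(gm_fin mY) -(gm_fin mZ).
by rewrite lee_fin.
Qed.

Lemma cont_above (F : nat -> set (n.-tuple R)) :
  (forall k, measurable (F k)) -> (forall k, F k.+1 `<=` F k) ->
  mu (\bigcap_k F k) = 0%E -> forall e : R, 0 < e -> exists k, fine (mu (F k)) <= e.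
Proof.
move=> mF dF F0 e e0.
have hom : {homo F : a b / (a <= b)%N >-> (b <= a)%O}.
  move=> a b ab; apply/subsetPset; elim: b ab => [|b IH].
    by rewrite leqn0 => /eqP ->.
  rewrite leq_eqVlt => /orP[/eqP -> //|]; rewrite ltnS => /IH.
  exact: subset_trans (dF b).
have fin0 : (mu (F 0%N) < +oo)%E by rewrite (gm_fin (mF 0%N)) ltry.
have h := @nonincreasing_cvg_mu _ _ _ mu F fin0 mF (bigcapT_measurable mF) hom.
have h' : (mu \o F) @ \oo --> 0%E by rewrite -F0; exact: h.
have [_ hc] := (fine_cvgP (F := \oo) (mu \o F) 0).1 h'.
move/cvgr_dist_le : hc => /(_ e e0) [N _ hN].
exists N; have := hN N (leqnn N); rewrite /= sub0r normrN.
by apply: le_trans; rewrite ler_norm.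
Qed.

Lemma meas_shift (A : set vec) (c : vec) :
  measurable (@Phi R n @^-1` A) -> measurable (@Phi R n @^-1` [set z | A (z + c)]).
Proof.
move=> mA.
pose f (u : n.-tuple R) : n.-tuple R := [tuple tnth u i + c ord0 i | i < n].
have mf : measurable_fun setT f.
  apply/measurable_fun_tnthP => i.
  have -> : (fun u => tnth u i) \o f = fun u => tnth u i + c ord0 i.
    by apply/funext => u /=; rewrite tnth_mktuple.
  apply: measurable_funD; [exact: measurable_tnth | exact: measurable_cst].
have -> : @Phi R n @^-1` [set z | A (z + c)] = setT `&` f @^-1` (@Phi R n @^-1` A).
  apply/seteqP; split => u /=.
    move=> h; split => //; suff -> : Phi (f u) = Phi u + c by [].
    by apply/rowP => i; rewrite !mxE tnth_mktuple.
  move=> [_ h]; suff <- : Phi (f u) = Phi u + c by [].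
  by apply/rowP => i; rewrite !mxE tnth_mktuple.
exact: mf.
Qed.

Lemma meas_half (v : vec) (t : R) :
  measurable (@Phi R n @^-1` [set z | t < dotv z v]).
Proof.
pose f (u : n.-tuple R) : R := \sum_(i < n) tnth u i * v ord0 i.
have mf : measurable_fun setT f.
  apply: measurable_sum => i; apply: measurable_funM;
    [exact: measurable_tnth | exact: measurable_cst].
have dE u : dotv (Phi u) v = f u.
  by rewrite /dotv /f; apply: eq_bigr => i _; rewrite PhiE.
have -> : @Phi R n @^-1` [set z | t < dotv z v] = setT `&` f @^-1` `]t, +oo[.
  apply/seteqP; split => u /=; rewrite dE.
    by move=> h; split => //; rewrite in_itv /= andbT.
  by move=> [_]; rewrite in_itv /= andbT.
exact: mf.
Qed.

Lemma haus_small (A B : set vec) (d : R) : (hausdorff_dist A B < d%:E)%E ->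
  exists e : R, [/\ e < d,
    (forall a, A a -> exists2 b, B b & enorm (a - b) <= e) &
    (forall b, B b -> exists2 a, A a & enorm (a - b) <= e)].
Proof.
move=> /ereal_inf_lt [y [e [_ [h1 h2]] ey] yd].
by exists e; split => //; rewrite -lte_fin ey.
Qed.

End Main.

Unset Implicit Arguments. Set Strict Implicit. Set Printing Implicit Defensive.

Theorem lemma3p8 (R : realType) (n : nat) (C : set 'rV[R]_n) (v : 'rV[R]_n)
  (Kj : nat -> set 'rV[R]_n) (K : set 'rV[R]_n) :
  closed_convex_cone C -> pointed C -> full_dim C ->
  enorm v = 1 -> interior C v -> interior [set x | polar C (- x)] v ->
  (forall j, C_pseudo_cone C (Kj j)) -> C_pseudo_cone C K ->
  pc_cvg C v Kj K ->
  (fun j => gaussian (Kj j)) @ \oo --> gaussian K.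
Proof.
move=> [C0 clC cvC coneC] _ _ nv iCv _ hKj hK [t0 t00 [_ hH]].
have [rho rho0 hrho] := interior_ball iCv.
have vC : C v by apply: hrho => i; rewrite subrr normr0.
have dvv := dotv1 nv.
have vle1 i : `|v ord0 i| <= 1 by rewrite -nv coord_le_enorm.
have recA (A : set 'rV[R]_n) : C_pseudo_cone C A -> forall a c, A a -> C c -> A (a + c).
  by move=> [pA rA] a c Aa; rewrite -rA => /(_ a Aa).
have subC (A : set 'rV[R]_n) : C_pseudo_cone C A -> A `<=` C.
  by move=> [pA rA] x Ax; rewrite -rA; exact: pc_rec.
have clA (A : set 'rV[R]_n) : C_pseudo_cone C A -> closed A by case=> -[].
have mA (A : set 'rV[R]_n) : C_pseudo_cone C A -> measurable (@Phi R n @^-1` A).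
  by move=> cA; apply: closed_meas; exact: clA.
pose T (A : set 'rV[R]_n) := @Phi R n @^-1` A.
pose g (A : set 'rV[R]_n) := fine (gm R n (T A)).
have gE A : C_pseudo_cone C A -> gaussian A = (g A)%:E.
  by move=> cA; rewrite /gaussian -gmE gm_fin //; exact: mA.
rewrite (gE K hK).
have -> : (fun j => gaussian (Kj j)) = (fun j => (g (Kj j))%:E).
  by apply/funext => j; exact: gE.
apply: cvg_EFin; first exact: nearW.
apply/cvgrPdist_le => e e0 /=.
pose Km (s : R) := [set z : 'rV[R]_n | K (z + s *: v)].
pose Kp (s : R) := [set z : 'rV[R]_n | K (z - s *: v)].
pose D k := Km (harmonic k) `\` Kp (harmonic k).
pose H (t : R) := [set z : 'rV[R]_n | t < dotv z v].
have mKm s : measurable (T (Km s)) := meas_shift (s *: v) (mA K hK).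
have mKp s : measurable (T (Kp s)) := meas_shift (- (s *: v)) (mA K hK).
have mD k : measurable (T (D k)) := measurableD (mKm _) (mKp _).
have mH t : measurable (T (H t)) := meas_half v t.
have e30 : 0 < e / 3 by rewrite divr_gt0.
have [kH hkH] : exists k, g (H (t0 + k%:R)) <= e / 3.
  apply: (@cont_above R n (fun k => T (H (t0 + k%:R)))) => //.
  - by move=> k u /=; apply: lt_trans; rewrite ltrD2l ltr_nat.
  - have -> : \bigcap_k T (H (t0 + k%:R)) = set0.
      apply/seteqP; split => // u hu.
      have := hu (truncn `|dotv (Phi u) v|).+1 I; rewrite /= => hlt.
      have h1 := truncnS_gt `|dotv (Phi u) v|.
      have h2 := ler_norm (dotv (Phi u) v).
      move: hlt h1 h2; set d := dotv (Phi u) v; set N := truncn `|d|.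
      rewrite -natr1 /T /H /= => h3 h4 h5; rewrite -/d in h3; lra.
    by rewrite gmE gauss0.
set t := t0 + kH%:R.
have tt0 : t0 <= t by rewrite /t lerDl.
have cvxT : convT (T K).
  move=> a b u l Ka Kb l01 hu; rewrite /T /preimage /=.
  have -> : Phi u = l *: Phi a + (1 - l) *: Phi b.
    by apply/rowP => i; rewrite !mxE ?PhiE hu.
  by case: hK => -[_ _ cvK _ _] _; apply: cvK.
have capE : \bigcap_k T (D k) = T K `\` intT (T K).
  apply/seteqP; split => u.
  - move=> hu.
    have hm k : K (Phi u + harmonic k *: v) by have [] := hu k I.
    have hp k : ~ K (Phi u - harmonic k *: v) by have [] := hu k I.
    split; first exact: (close_lim (clA K hK) hm).
    move=> [r r0 hr]; have [k hk] := exists_inv_lt r0; apply: (hp k).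
    pose u' := [tuple tnth u i - harmonic k * v ord0 i | i < n].
    have -> : Phi u - harmonic k *: v = Phi u'.
      by apply/rowP => i; rewrite !mxE ?PhiE tnth_mktuple.
    apply: hr => i; rewrite tnth_mktuple addrAC subrr add0r normrN normrM.
    rewrite ger0_norm ?harmonic_ge0 //; apply: le_lt_trans hk.
    by rewrite /= ler_piMr ?invr_ge0.
  - move=> [Ku nI] k _; split.
      by apply: recA hK _ _ Ku _; apply: coneC vC _; exact: harmonic_ge0.
    move=> hp; apply: nI; exists (harmonic k * rho); first by rewrite mulr_gt0 ?harmonic_gt0.
    move=> u' hu'.
    have := @shift_in_coord R n C K v (Phi u - harmonic k *: v)
      (Phi u' - harmonic k *: v) (harmonic k) rho (recA K hK) coneC hrho
      (harmonic_gt0 k) hp.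
    rewrite subrK; apply => i; rewrite !mxE ?PhiE opprB addrA subrK; exact: hu'.
have [kD hkD] : exists k, g (D k) <= e / 3.
  apply: (@cont_above R n (fun k => T (D k))) => //.
  - move=> k u; rewrite /T /D /Km /Kp /preimage /= => -[hm hp]; split.
      have -> : Phi u + harmonic k *: v = (Phi u + harmonic k.+1 *: v) +
          (harmonic k - harmonic k.+1) *: v by rewrite scalerBl addrA addrAC addrK.
      apply: recA hK _ _ hm _; apply: coneC vC _; rewrite subr_ge0 /=.
      by rewrite lef_pV2 ?posrE // ler_nat.
    move=> hk; apply: hp.
    have -> : Phi u - harmonic k.+1 *: v = (Phi u - harmonic k *: v) +
        (harmonic k - harmonic k.+1) *: v by rewrite scalerBl addrA subrK.
    apply: recA hK _ _ hk _; apply: coneC vC _; rewrite subr_ge0 /=.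
    by rewrite lef_pV2 ?posrE // ler_nat.
  - by rewrite capE gmE; exact: null_bd.
pose s : R := harmonic kD.
have s0 : 0 < s by exact: harmonic_gt0.
have hsr : 0 < s * rho by rewrite mulr_gt0.
have nb : nbhs (0%R)%:E [set y | (y < (s * rho)%:E)%E].
  exact: (nbhs_open_ereal_lt (f := fun=> s * rho) hsr).
have [NC _ hNC] := hH t tt0 _ nb.
exists NC => // j /= hj.
have [e' [e's h1 h2]] := haus_small (hNC j hj).
have iA : T (Kj j) `<=` T (Km s) `|` T (H t).
  move=> u /= Ku; case: (lerP (dotv (Phi u) v) t) => hd; [left|by right].
  have [b [Kb _] hb] := h1 (Phi u) (conj Ku (conj (subC _ (hKj j) _ Ku) hd)).
  apply: (@shift_in R n C K v b (Phi u) s rho (recA K hK) coneC hrho s0 Kb).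
  exact: le_lt_trans hb e's.
have iB : T (Kp s) `<=` T (Kj j) `|` T (H t).
  move=> u /= Kpu; case: (lerP (dotv (Phi u) v) t) => hd; [left|by right].
  have hw : dotv (Phi u - s *: v) v <= t.
    by rewrite dotvBl dotvZl dvv mulr1; lra.
  have [a [Ka _] ha] := h2 _ (conj Kpu (conj (subC _ hK _ Kpu) hw)).
  have := @shift_in R n C (Kj j) v a (Phi u - s *: v) s rho (recA _ (hKj j)) coneC
    hrho s0 Ka.
  rewrite subrK; apply; rewrite -enormN opprB; exact: le_lt_trans ha e's.
have iC : T (Km s) `<=` T K `|` T (D kD).
  move=> u /= hm; case: (pselect (K (Phi u - s *: v))) => hp; last by right.
  left; rewrite /T /preimage /=.
  have -> : Phi u = (Phi u - s *: v) + s *: v by rewrite subrK.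
  by apply: recA hK _ _ hp _; apply: coneC vC _; exact: ltW.
have iD : T K `<=` T (Kp s) `|` T (D kD).
  move=> u /= Ku; case: (pselect (K (Phi u - s *: v))) => hp; first by left.
  right; split => //; rewrite /Km /=; apply: recA hK _ _ Ku _; apply: coneC vC _; exact: ltW.
have f1 := g_le_union (mA _ (hKj j)) (mKm s) (mH t) iA.
have f2 := g_le_union (mKp s) (mA _ (hKj j)) (mH t) iB.
have f3 := g_le_union (mKm s) (mA _ hK) (mD kD) iC.
have f4 := g_le_union (mA _ hK) (mKp s) (mD kD) iD.
rewrite /g /T /t /= in f1 f2 f3 f4 hkH hkD *.
rewrite ler_norml; apply/andP; split; lra.
Qed.
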